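(* Assume $q^{2d}\neq1$ for all integers $d\ge1$. The algebra of universal invariants of the universal linear form, i.e. the subalgebra $\{\mathcal I\in\mathbb C\langle\mathcal A,\mathcal B\rangle : E\mathcal I=F\mathcal I=0,\ K\mathcal I=\mathcal I\}$ of the free algebra on $\mathcal A,\mathcal B$, has no finite set of generators.
   Context: Fix $q\in\mathbb C$ with $|q|=1$, $q\neq\pm1,\pm i$, and a square root $q^{1/2}$. $\mathbb C\langle\mathcal A,\mathcal B\rangle$ is the free associative algebra on two variables (the coefficients of the universal linear form $x\mathcal A+y\mathcal B$), with the action $K\mathcal A=q^{1/2}\mathcal A$, $K\mathcal B=q^{-1/2}\mathcal B$, $E\mathcal A=0$, $E\mathcal B=-q^{3/2}\mathcal A$, $F\mathcal A=-q^{-3/2}\mathcal B$, $F\mathcal B=0$, $K1=1$, $E1=F1=0$, extended by $K(ab)=K(a)K(b)$, $E(ab)=E(a)K(b)+K^{-1}(a)E(b)$, $F(ab)=F(a)K(b)+K^{-1}(a)F(b)$. *)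

(* Defs.v *)
(* The complex numbers are modelled as R[i] (mathcomp
   real_closed `complex`) over an arbitrary realType R (a complete archimedean
   ordered field, i.e. a model of the reals). *)
From Stdlib Require List.
From HB Require Import structures.
From mathcomp Require Import all_boot all_order all_algebra.
From mathcomp Require Import reals.
From mathcomp Require Import complex.
Set Implicit Arguments. Unset Strict Implicit. Unset Printing Implicit Defensive.
Import Order.TTheory GRing.Theory Num.Theory.
Local Open Scope ring_scope.

(* Words in the two letters: false = A, true = B. *)
Definition word := seq bool.

Section FreeAlgebra.
Variable C : fieldType.

(* An element of the free algebra C<A,B> is a finitely supported function
   word -> C (coefficient of each monomial).  Since the alphabet is finite,
   finite support is equivalent to bounded word length of the support. *)
Definition fa := word -> C.
Definition fsupp (p : fa) : Prop := exists n, forall w, (n <= size w)%N -> p w = 0.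

Definition fa0 : fa := fun _ => 0.
Definition fa_add (f g : fa) : fa := fun w => f w + g w.
Definition fa_scale (c : C) (f : fa) : fa := fun w => c * f w.
Definition delta (u : word) : fa := fun w => (w == u)%:R.
Definition fa1 : fa := delta [::].
Definition fa_mul (f g : fa) : fa :=
  fun w => \sum_(i < (size w).+1) f (take i w) * g (drop i w).

Inductive gen (S : seq fa) : fa -> Prop :=
| gen_one : gen S fa1
| gen_mem f : List.In f S -> gen S f
| gen_add f g : gen S f -> gen S g -> gen S (fa_add f g)
| gen_scale c f : gen S f -> gen S (fa_scale c f)
| gen_mul f g : gen S f -> gen S g -> gen S (fa_mul f g)
| gen_ext f g : gen S f -> (forall w, f w = g w) -> gen S g.

Variable s : C. (* the chosen square root q^{1/2} *)

Definition Kscal (w : word) : C := s ^+ count (fun b => ~~ b) w * s ^- count id w.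
Definition Kmon (w : word) : fa := fa_scale (Kscal w) (delta w).
Definition Kinvmon (w : word) : fa := fa_scale (Kscal w)^-1 (delta w).

Definition Egen (x : bool) : fa :=
  if x then fa_scale (- s ^+ 3) (delta [:: false]) else fa0.
Definition Fgen (x : bool) : fa :=
  if x then fa0 else fa_scale (- s ^- 3) (delta [:: true]).

(* Extension to monomials by the twisted Leibniz rule with a = x, b = w:
   E(x w) = E(x) K(w) + K^{-1}(x) E(w), E(1) = 0 (same for F). *)
Fixpoint Emon (w : word) : fa :=
  match w with
  | [::] => fa0
  | x :: w' => fa_add (fa_mul (Egen x) (Kmon w')) (fa_mul (Kinvmon [:: x]) (Emon w'))
  end.
Fixpoint Fmon (w : word) : fa :=
  match w with
  | [::] => fa0
  | x :: w' => fa_add (fa_mul (Fgen x) (Kmon w')) (fa_mul (Kinvmon [:: x]) (Fmon w'))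
  end.

(* Linear extension.  K, E, F send a monomial of length n to a combination of
   monomials of length n, so the coefficient of w' in X(p) only involves the
   monomials of p of length size w'. *)
Definition lin_ext (M : word -> fa) (p : fa) : fa :=
  fun w' => \sum_(t : (size w').-tuple bool) p t * M t w'.
Definition Kop := lin_ext Kmon.
Definition Eop := lin_ext Emon.
Definition Fop := lin_ext Fmon.

Definition invariant (I : fa) : Prop :=
  fsupp I /\ (forall w, Eop I w = 0) /\ (forall w, Fop I w = 0)
  /\ (forall w, Kop I w = I w).

Definition inv_fin_gen : Prop :=
  exists S : seq fa, (forall f, List.In f S -> invariant f) /\
    (forall I, invariant I -> gen S I).

End FreeAlgebra.

(* Main.v *)
Require Import Defs.
From Stdlib Require Import FunctionalExtensionality.
From HB Require Import structures.
From mathcomp Require Import all_boot all_order all_algebra.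
From mathcomp Require Import reals.
From mathcomp Require Import complex.
From mathcomp Require Import ring zify.
From Stdlib Require Import Lia.
Import Order.TTheory GRing.Theory Num.Theory.
Local Open Scope ring_scope.

Section Work.
Variable C : fieldType.
Variable s : C.
Hypothesis s0 : s != 0.

Definition sh (y : bool) (f : fa C) : fa C := fun t => f (y :: t).
Definition Kf (f : fa C) : fa C := fun w => Kscal s w * f w.
Definition Kif (f : fa C) : fa C := fun w => (Kscal s w)^-1 * f w.

Lemma fa_mul_nil (f g : fa C) : fa_mul f g [::] = f [::] * g [::].
Proof. by rewrite /fa_mul big_ord_recl big_ord0 addr0. Qed.

Lemma fa_mul_cons (f g : fa C) y w :
  fa_mul f g (y :: w) = f [::] * g (y :: w) + fa_mul (sh y f) g w.
Proof. by rewrite /fa_mul big_ord_recl. Qed.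

Lemma Kscal_nil : Kscal s [::] = 1.
Proof. by rewrite /Kscal /= expr0 invr1 mulr1. Qed.

Lemma Kscal_cat u v : Kscal s (u ++ v) = Kscal s u * Kscal s v.
Proof.
rewrite /Kscal !count_cat !exprD invfM.
by rewrite mulrACA.
Qed.

Lemma Kscal_cons y w : Kscal s (y :: w) = Kscal s [:: y] * Kscal s w.
Proof. by rewrite -Kscal_cat. Qed.

Lemma Kscal_A : Kscal s [:: false] = s.
Proof. by rewrite /Kscal /= expr1 expr0 invr1 mulr1. Qed.
Lemma Kscal_B : Kscal s [:: true] = s^-1.
Proof. by rewrite /Kscal /= expr1 expr0 mul1r. Qed.

Lemma Kscal_neq0 w : Kscal s w != 0.
Proof. by rewrite /Kscal mulf_neq0 ?invr_eq0 ?expf_neq0. Qed.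

Lemma sum_tuple_cons n (F : word -> C) :
  \sum_(t : n.+1.-tuple bool) F t = \sum_(x : bool) \sum_(t : n.-tuple bool) F (x :: t).
Proof.
rewrite pair_big /=.
rewrite (reindex (fun p : bool * n.-tuple bool => [tuple of p.1 :: p.2])) /=.
  by apply: eq_bigr => -[x t].
exists (fun t : n.+1.-tuple bool => (thead t, behead_tuple t)) => [[x t] _|t _] /=.
  by congr pair; apply: val_inj.
by case/tupleP: t => x t; apply: val_inj.
Qed.

Lemma sum_tuple_delta (w : word) (F : word -> C) :
  \sum_(t : (size w).-tuple bool) F t * (w == t)%:R = F w.
Proof.
rewrite (bigD1 (in_tuple w)) //= eqxx mulr1 big1 ?addr0 // => t ne.
case: eqP => [e|]; last by rewrite mulr0.
by case/eqP: ne; apply: val_inj => /=; apply/esym.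
Qed.

Lemma fa_mul_0l (g : fa C) w : fa_mul (fun _ => 0) g w = 0.
Proof. by rewrite /fa_mul big1 // => i _; rewrite mul0r. Qed.

Lemma fa_mul_d0 c (g : fa C) w : fa_mul (fa_scale c (delta C [::])) g w = c * g w.
Proof.
case: w => [|y w]; first by rewrite fa_mul_nil /fa_scale /delta eqxx mulr1.
rewrite fa_mul_cons /fa_scale /delta eqxx mulr1.
have -> : sh y (fun w0 => c * (w0 == [::])%:R) = (fun _ => 0).
  by apply: functional_extensionality => t; rewrite /sh /= mulr0.
by rewrite fa_mul_0l addr0.
Qed.

Lemma sh_delta1 x y : sh y (delta C [:: x]) = fa_scale (y == x)%:R (delta C [::]).
Proof.
apply: functional_extensionality => t; rewrite /sh /delta /fa_scale eqseq_cons.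
by case: (y == x); rewrite ?mul1r ?mul0r.
Qed.

Lemma Emon_cons x t y w :
  Emon s (x :: t) (y :: w) =
  (if x && ~~ y then - s ^+ 3 * Kscal s t * (w == t)%:R else 0)
  + (x == y)%:R * (Kscal s [:: x])^-1 * Emon s t w.
Proof.
rewrite /= /fa_add !fa_mul_cons.
have -> : Egen s x [::] = 0 by case: x; rewrite /Egen /fa_scale /fa0 /delta ?mulr0.
have -> : Kinvmon s [:: x] [::] = 0 by rewrite /Kinvmon /fa_scale /delta mulr0.
rewrite !mul0r !add0r.
have -> : sh y (Egen s x) = fa_scale (if x && ~~ y then - s ^+ 3 else 0) (delta C [::]).
  apply: functional_extensionality => u; rewrite /sh /Egen /fa_scale.
  case: x => /=; last by rewrite /fa0 mul0r.
  rewrite /delta eqseq_cons; case: y => //=; by rewrite ?mul0r ?mulr0.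
have -> : sh y (Kinvmon s [:: x]) = fa_scale ((x == y)%:R * (Kscal s [:: x])^-1) (delta C [::]).
  apply: functional_extensionality => u; rewrite /sh /Kinvmon /fa_scale /delta eqseq_cons eq_sym.
  by case: (x == y); rewrite /= ?mulr0 ?mul0r ?mul1r.
rewrite !fa_mul_d0 /Kmon /fa_scale /delta.
by case: (x && ~~ y); rewrite ?mul0r ?mulrA.
Qed.

Lemma Fmon_cons x t y w :
  Fmon s (x :: t) (y :: w) =
  (if ~~ x && y then - s ^- 3 * Kscal s t * (w == t)%:R else 0)
  + (x == y)%:R * (Kscal s [:: x])^-1 * Fmon s t w.
Proof.
rewrite /= /fa_add !fa_mul_cons.
have -> : Fgen s x [::] = 0 by case: x; rewrite /Fgen /fa_scale /fa0 /delta ?mulr0.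
have -> : Kinvmon s [:: x] [::] = 0 by rewrite /Kinvmon /fa_scale /delta mulr0.
rewrite !mul0r !add0r.
have -> : sh y (Fgen s x) = fa_scale (if ~~ x && y then - s ^- 3 else 0) (delta C [::]).
  apply: functional_extensionality => u; rewrite /sh /Fgen /fa_scale.
  case: x => /=; first by rewrite /fa0 mul0r.
  rewrite /delta eqseq_cons; case: y => //=; by rewrite ?mul0r ?mulr0.
have -> : sh y (Kinvmon s [:: x]) = fa_scale ((x == y)%:R * (Kscal s [:: x])^-1) (delta C [::]).
  apply: functional_extensionality => u; rewrite /sh /Kinvmon /fa_scale /delta eqseq_cons eq_sym.
  by case: (x == y); rewrite /= ?mulr0 ?mul0r ?mul1r.
rewrite !fa_mul_d0 /Kmon /fa_scale /delta.
by case: (~~ x && y); rewrite ?mul0r ?mulrA.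
Qed.
Definition aE (y : bool) : C := if y then 0 else - s ^+ 3.
Definition aF (y : bool) : C := if y then - s ^- 3 else 0.

Lemma Eop_nil p : Eop s p [::] = 0.
Proof.
rewrite /Eop /lin_ext big1 // => t _.
by rewrite (tuple0 t) /= /fa0 mulr0.
Qed.

Lemma Eop_cons p y w :
  Eop s p (y :: w) = aE y * Kscal s w * p (~~ y :: w) + (Kscal s [:: y])^-1 * Eop s (sh y p) w.
Proof.
rewrite /Eop /lin_ext.
rewrite (sum_tuple_cons (size w) (fun t => p t * Emon s t (y :: w))) big_bool.
under eq_bigr do rewrite Emon_cons /= mulrDr.
under [X in _ + X = _]eq_bigr do rewrite Emon_cons /= mulrDr.
rewrite !big_split /=.
have Z x : \sum_(i : (size w).-tuple bool) p (x :: i) * 0 = 0.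
  by rewrite big1 // => i _; rewrite mulr0.
have ZZ x k : \sum_(i : (size w).-tuple bool) p (x :: i) * (0 / k * Emon s i w) = 0.
  by rewrite big1 // => i _; rewrite !mul0r mulr0.
case: y => /=; rewrite !Z !ZZ ?add0r ?addr0 ?mul0r ?add0r big_distrr /=.
  by apply: eq_bigr => i _; rewrite /sh mul1r mulrCA.
under eq_bigr do rewrite mulrA.
rewrite (sum_tuple_delta w (fun i => p (true :: i) * (- s ^+ 3 * Kscal s i))).
congr (_ + _); first by rewrite mulrC.
by apply: eq_bigr => i _; rewrite /sh mul1r mulrCA.
Qed.

Lemma Fop_nil p : Fop s p [::] = 0.
Proof.
rewrite /Fop /lin_ext big1 // => t _.
by rewrite (tuple0 t) /= /fa0 mulr0.
Qed.

Lemma Fop_cons p y w :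
  Fop s p (y :: w) = aF y * Kscal s w * p (~~ y :: w) + (Kscal s [:: y])^-1 * Fop s (sh y p) w.
Proof.
rewrite /Fop /lin_ext.
rewrite (sum_tuple_cons (size w) (fun t => p t * Fmon s t (y :: w))) big_bool.
under eq_bigr do rewrite Fmon_cons /= mulrDr.
under [X in _ + X = _]eq_bigr do rewrite Fmon_cons /= mulrDr.
rewrite !big_split /=.
have Z x : \sum_(i : (size w).-tuple bool) p (x :: i) * 0 = 0.
  by rewrite big1 // => i _; rewrite mulr0.
have ZZ x k : \sum_(i : (size w).-tuple bool) p (x :: i) * (0 / k * Fmon s i w) = 0.
  by rewrite big1 // => i _; rewrite !mul0r mulr0.
case: y => /=; rewrite !Z !ZZ ?add0r ?addr0 ?mul0r ?add0r big_distrr /=; last first.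
  by apply: eq_bigr => i _; rewrite /sh mul1r mulrCA.
under [X in _ + X = _]eq_bigr do rewrite mulrA.
rewrite (sum_tuple_delta w (fun i => p (false :: i) * (- s ^- 3 * Kscal s i))) addrC.
congr (_ + _); first by rewrite mulrC.
by apply: eq_bigr => i _; rewrite /sh mul1r mulrCA.
Qed.

Lemma Kop_Kf p w : Kop s p w = Kf p w.
Proof.
rewrite /Kop /lin_ext /Kmon /fa_scale /delta.
under eq_bigr do rewrite mulrA.
by rewrite (sum_tuple_delta w (fun t => p t * Kscal s t)) /Kf mulrC.
Qed.

Lemma fa_mul_addl (u v h : fa C) : fa_mul (fa_add u v) h = fa_add (fa_mul u h) (fa_mul v h).
Proof.
apply: functional_extensionality => w; rewrite /fa_mul /fa_add -big_split /=.
by apply: eq_bigr => i _; rewrite mulrDl.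
Qed.
Lemma fa_mul_addr (u v h : fa C) : fa_mul h (fa_add u v) = fa_add (fa_mul h u) (fa_mul h v).
Proof.
apply: functional_extensionality => w; rewrite /fa_mul /fa_add -big_split /=.
by apply: eq_bigr => i _; rewrite mulrDr.
Qed.
Lemma fa_mul_scalel c (u h : fa C) : fa_mul (fa_scale c u) h = fa_scale c (fa_mul u h).
Proof.
apply: functional_extensionality => w; rewrite /fa_mul /fa_scale big_distrr /=.
by apply: eq_bigr => i _; rewrite mulrA.
Qed.
Lemma fa_mul_scaler c (u h : fa C) : fa_mul h (fa_scale c u) = fa_scale c (fa_mul h u).
Proof.
apply: functional_extensionality => w; rewrite /fa_mul /fa_scale big_distrr /=.
by apply: eq_bigr => i _; rewrite mulrCA.
Qed.
Lemma fa_mul_0r (h : fa C) : fa_mul h (fa0 C) = fa0 C.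
Proof.
apply: functional_extensionality => w; rewrite /fa_mul /fa0 big1 // => i _.
by rewrite mulr0.
Qed.
Lemma fa_mul_0l' (h : fa C) : fa_mul (fa0 C) h = fa0 C.
Proof.
apply: functional_extensionality => w; rewrite /fa_mul /fa0 big1 // => i _.
by rewrite mul0r.
Qed.

Lemma Kf_mul (u v : fa C) : Kf (fa_mul u v) = fa_mul (Kf u) (Kf v).
Proof.
apply: functional_extensionality => w; rewrite /Kf /fa_mul big_distrr /=.
apply: eq_bigr => i _.
by rewrite -{1}(cat_take_drop i w) Kscal_cat mulrACA.
Qed.
Lemma Kif_mul (u v : fa C) : Kif (fa_mul u v) = fa_mul (Kif u) (Kif v).
Proof.
apply: functional_extensionality => w; rewrite /Kif /fa_mul big_distrr /=.
apply: eq_bigr => i _.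
by rewrite -{1}(cat_take_drop i w) Kscal_cat invfM mulrACA.
Qed.

Section Deriv.
Variable X : fa C -> fa C.
Variable a : bool -> C.
Hypothesis X0 : forall p, X p [::] = 0.
Hypothesis X1 : forall p y w,
  X p (y :: w) = a y * Kscal s w * p (~~ y :: w) + (Kscal s [:: y])^-1 * X (sh y p) w.

Lemma X_add (f g : fa C) : X (fa_add f g) = fa_add (X f) (X g).
Proof.
apply: functional_extensionality => w; elim: w f g => [|y w IH] f g.
  by rewrite /fa_add !X0 addr0.
rewrite /fa_add !X1.
have -> : sh y (fun w0 => f w0 + g w0) = fa_add (sh y f) (sh y g) by [].
rewrite IH /fa_add mulrDr mulrDr; rewrite -!addrA; congr (_ + _).
by rewrite addrCA.
Qed.

Lemma X_scale c (f : fa C) : X (fa_scale c f) = fa_scale c (X f).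
Proof.
apply: functional_extensionality => w; elim: w f => [|y w IH] f.
  by rewrite /fa_scale !X0 mulr0.
rewrite /fa_scale !X1.
have -> : sh y (fun w0 => c * f w0) = fa_scale c (sh y f) by [].
rewrite IH /fa_scale mulrDr; congr (_ + _); by rewrite mulrCA.
Qed.

Lemma X_0 : X (fa0 C) = fa0 C.
Proof.
apply: functional_extensionality => w; elim: w => [|y w IH]; first by rewrite X0.
rewrite X1.
have -> : sh y (fa0 C) = fa0 C by [].
by rewrite IH /fa0 !mulr0 addr0.
Qed.

Lemma X_mul (f g : fa C) :
  X (fa_mul f g) = fa_add (fa_mul (X f) (Kf g)) (fa_mul (Kif f) (X g)).
Proof.
apply: functional_extensionality => w; elim: w f => [|y w IH] f.
  by rewrite /fa_add !fa_mul_nil !X0 mul0r mulr0 addr0.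
have shm : sh y (fa_mul f g) = fa_add (fa_scale (f [::]) (sh y g)) (fa_mul (sh y f) g).
  by apply: functional_extensionality => t; rewrite /sh fa_mul_cons.
have shX : sh y (X f) = fa_add (fa_scale (a y) (Kf (sh (~~ y) f)))
                              (fa_scale (Kscal s [:: y])^-1 (X (sh y f))).
  apply: functional_extensionality => t; rewrite /sh X1 /fa_add /fa_scale /Kf.
  by rewrite mulrA.
have shK : sh y (Kif f) = fa_scale (Kscal s [:: y])^-1 (Kif (sh y f)).
  apply: functional_extensionality => t; rewrite /sh /Kif /fa_scale Kscal_cons invfM.
  by rewrite mulrA.
rewrite X1 shm X_add X_scale /fa_add.
rewrite !fa_mul_cons shX shK X0 mul0r add0r fa_mul_addl !fa_mul_scalel -Kf_mul.
rewrite IH X1 /fa_add /fa_scale /Kf /Kif Kscal_nil invr1 mul1r.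
set k := (Kscal s [:: y])^-1.
set Kw := Kscal s w.
rewrite !mulrDr.
ring.
Qed.

Lemma X_d0 : X (delta C [::]) = fa0 C.
Proof.
apply: functional_extensionality => w; case: w => [|y w]; first by rewrite X0.
rewrite X1.
have -> : sh y (delta C [::]) = fa0 C by [].
by rewrite X_0 /fa0 /delta /= !mulr0 addr0.
Qed.

Lemma X_d1 x : X (delta C [:: x]) = fa_scale (a (~~ x)) (delta C [:: ~~ x]).
Proof.
apply: functional_extensionality => w; case: w => [|y w].
  by rewrite X0 /fa_scale /delta mulr0.
rewrite X1 sh_delta1 X_scale X_d0 /fa_scale /fa0 mulr0 mulr0 addr0 /delta !eqseq_cons.
case: w => [|z w]; last by rewrite !andbF !mulr0.
rewrite Kscal_nil mulr1 !andbT.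
by case: x; case: y => /=; rewrite ?mulr0 ?mulr1.
Qed.

Definition T x (J : fa C) z := fa_mul (fa_mul (delta C [:: x]) J) (delta C [:: z]).

Lemma Kf_d1 x : Kf (delta C [:: x]) = fa_scale (Kscal s [:: x]) (delta C [:: x]).
Proof.
apply: functional_extensionality => w; rewrite /Kf /fa_scale /delta.
by case: eqP => [->|]; rewrite ?mulr0.
Qed.
Lemma Kif_d1 x : Kif (delta C [:: x]) = fa_scale (Kscal s [:: x])^-1 (delta C [:: x]).
Proof.
apply: functional_extensionality => w; rewrite /Kif /fa_scale /delta.
by case: eqP => [->|]; rewrite ?mulr0.
Qed.

Lemma Kif_inv (J : fa C) : Kf J = J -> Kif J = J.
Proof.
move=> KJ; apply: functional_extensionality => w.
rewrite -{1}KJ /Kif /Kf mulrA mulVf ?mul1r //; exact: Kscal_neq0.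
Qed.

Lemma fa_add0 (u : fa C) : fa_add u (fa0 C) = u.
Proof. by apply: functional_extensionality => w; rewrite /fa_add /fa0 addr0. Qed.

Lemma X_T x J z : X J = fa0 C -> Kf J = J ->
  X (T x J z) = fa_add (fa_scale (a (~~ x) * Kscal s [:: z]) (T (~~ x) J z))
                       (fa_scale ((Kscal s [:: x])^-1 * a (~~ z)) (T x J (~~ z))).
Proof.
move=> XJ KJ; rewrite /T !X_mul XJ fa_mul_0r fa_add0 KJ X_d1 Kf_d1 Kif_mul Kif_d1 (Kif_inv _ KJ).
rewrite X_d1 !fa_mul_scalel !fa_mul_scaler.
by apply: functional_extensionality => w; rewrite /fa_add /fa_scale !mulrA.
Qed.

End Deriv.

Definition step (J : fa C) := fa_add (T false J true) (fa_scale (- s ^- 2) (T true J false)).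

Lemma X_step X a J : (forall p, X p [::] = 0) ->
  (forall p y w, X p (y :: w) = a y * Kscal s w * p (~~ y :: w) + (Kscal s [:: y])^-1 * X (sh y p) w) ->
  X J = fa0 C -> Kf J = J -> X (step J) = fa0 C.
Proof.
move=> X0 X1 XJ KJ; rewrite /step (@X_add X a X0 X1) (@X_scale X a X0 X1) !(@X_T X a X0 X1) //=.
rewrite Kscal_A Kscal_B invrK.
apply: functional_extensionality => w; rewrite /fa_add /fa_scale /fa0.
have e : s ^- 2 * s = s^-1 by rewrite expr2 invfM -mulrA mulVf ?mulr1.
set u := T false J false w; set v := T true J true w.
rewrite !mulrDr !mulrA.
field; exact: s0.
Qed.

Lemma Kf_add (u v : fa C) : Kf (fa_add u v) = fa_add (Kf u) (Kf v).
Proof. by apply: functional_extensionality => w; rewrite /Kf /fa_add mulrDr. Qed.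
Lemma Kf_scale c (u : fa C) : Kf (fa_scale c u) = fa_scale c (Kf u).
Proof. by apply: functional_extensionality => w; rewrite /Kf /fa_scale mulrCA. Qed.

Lemma Kf_step J : Kf J = J -> Kf (step J) = step J.
Proof.
move=> KJ; rewrite /step Kf_add Kf_scale /T !Kf_mul KJ !Kf_d1 !fa_mul_scalel !fa_mul_scaler.
rewrite Kscal_A Kscal_B.
apply: functional_extensionality => w; rewrite /fa_add /fa_scale !mulrA.
by rewrite mulfV // -[- s ^- 2 / s * s]mulrA mulVf // mulr1 mul1r.
Qed.

Fixpoint Iw n := if n is n'.+1 then step (Iw n') else delta C [::].

Lemma Kf_d0 : Kf (delta C [::]) = delta C [::].
Proof.
apply: functional_extensionality => w; rewrite /Kf /delta.
by case: eqP => [->|]; rewrite ?mulr0 // Kscal_nil mul1r.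
Qed.

Lemma Iw_props n : [/\ Eop s (Iw n) = fa0 C, Fop s (Iw n) = fa0 C & Kf (Iw n) = Iw n].
Proof.
have E0 := Eop_nil; have E1 := Eop_cons; have F0 := Fop_nil; have F1 := Fop_cons.
elim: n => [|n [EJ FJ KJ]] /=.
  by split; [exact: (X_d0 _ _ E0 E1) | exact: (X_d0 _ _ F0 F1) | exact: Kf_d0].
split; [exact: (X_step _ _ _ E0 E1) | exact: (X_step _ _ _ F0 F1) | exact: Kf_step].
Qed.

Definition fs (f : fa C) n := forall w, (n <= size w)%N -> f w = 0.

Lemma fs_mul (f g : fa C) n m : fs f n -> fs g m -> fs (fa_mul f g) (n + m).
Proof.
move=> hf hg w hw; rewrite /fa_mul big1 // => i _.
have : (n <= size (take i w))%N || (m <= size (drop i w))%N.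
  rewrite size_take size_drop; case: ltnP => h; lia.
by case/orP => [/hf ->|/hg ->]; rewrite ?mul0r ?mulr0.
Qed.

Arguments fs_mul {f g n m}.

Lemma fs_delta u : fs (delta C u) (size u).+1.
Proof.
move=> w hw; rewrite /delta; case: eqP => // e; move: hw; rewrite e; lia.
Qed.

Lemma fs_Iw n : exists m, fs (Iw n) m.
Proof.
elim: n => [|n [m hm]] /=; first by exists 1%N; exact: fs_delta.
exists (2 + m + 2)%N => w hw.
have H x z : T x (Iw n) z w = 0.
  by apply: (fs_mul (fs_mul (fs_delta _) hm) (fs_delta _)).
by rewrite /step /fa_add /fa_scale !H mulr0 addr0.
Qed.

Lemma mul_d1_l x (g : fa C) y w : fa_mul (delta C [:: x]) g (y :: w) = (y == x)%:R * g w.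
Proof.
rewrite fa_mul_cons sh_delta1 fa_mul_d0 /delta /= mul0r add0r //.
Qed.

Lemma mul_d1_r z (f : fa C) w y : fa_mul f (delta C [:: z]) (rcons w y) = (y == z)%:R * f w.
Proof.
elim: w f => [|x w IH] f /=.
  rewrite fa_mul_cons fa_mul_nil /delta /sh /= eqseq_cons andbT mulr0 addr0 mulrC //.
rewrite fa_mul_cons IH /delta eqseq_cons.
have -> : (rcons w y == [::]) = false by case: w {IH}.
by rewrite andbF mulr0 add0r.
Qed.

Definition wn n : word := nseq n false ++ nseq n true.

Lemma wnS n : wn n.+1 = rcons (false :: wn n) true.
Proof.
rewrite /wn /= rcons_cat; congr (_ :: _ ++ _).
by elim: n => //= n ->.
Qed.

Lemma Iw_wn n : Iw n (wn n) = 1.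
Proof.
elim: n => [|n IH]; first by rewrite /= /delta eqxx.
rewrite wnS [Iw _]/= /step /fa_add /fa_scale /T !mul_d1_r !mul_d1_l IH /=.
by rewrite !mul0r mulr0 addr0 !mul1r.
Qed.

Definition bal (f : fa C) := forall w, count negb w != count id w -> f w = 0.

Lemma take_wn n i : (0 < i < n + n)%N -> count negb (take i (wn n)) != count id (take i (wn n)).
Proof.
move=> /andP [h1 h2]; rewrite /wn take_cat size_nseq.
case: ltnP => h3.
  rewrite take_nseq ?(ltnW h3) // !count_nseq /=; lia.
rewrite take_nseq; last lia.
rewrite !count_cat !count_nseq /=; lia.
Qed.

Lemma P_gen (S : seq (fa C)) n f : (0 < n)%N ->
  (forall g, List.In g S -> bal g /\ g (wn n) = 0) -> gen S f -> bal f /\ f (wn n) = 0.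
Proof.
move=> n0 HS.
have wn0 : (wn n == [::]) = false by rewrite /wn; case: (n) n0.
elim => {f}.
- split; last by rewrite /fa1 /delta wn0.
  move=> w h; rewrite /fa1 /delta; case: (w =P [::]) h => [->|_ _] //.
- by move=> f /HS.
- move=> f g _ [bf wf] _ [bg wg]; split; last by rewrite /fa_add wf wg addr0.
  by move=> w h; rewrite /fa_add bf // bg // addr0.
- move=> c f _ [bf wf]; split; last by rewrite /fa_scale wf mulr0.
  by move=> w h; rewrite /fa_scale bf // mulr0.
- move=> f g _ [bf wf] _ [bg wg]; split.
    move=> w h; rewrite /fa_mul big1 // => i _.
    case: (boolP (count negb (take i w) == count id (take i w))) => [/eqP e1|ne].
      rewrite bg ?mulr0 //; apply: contra h => /eqP e2.
      by rewrite -(cat_take_drop i w) !count_cat e1 e2.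
    by rewrite bf ?mul0r.
  rewrite /fa_mul big1 // => -[i hi] _ /=.
  have sz : size (wn n) = (n + n)%N by rewrite /wn size_cat !size_nseq.
  case: i hi => [|i] hi; first by rewrite drop0 wg mulr0.
  case: (ltnP i.+1 (n + n)) => h.
    by rewrite bf ?mul0r //; apply: take_wn; rewrite h.
  rewrite take_oversize ?sz // wf mul0r //.
- by move=> f g _ [bf wf] e; split; [move=> w h; rewrite -e bf | rewrite -e].
Qed.

End Work.

Lemma Kscal_one (C : fieldType) (s : C) w : s != 0 -> (forall k, (0 < k)%N -> s ^+ k != 1) ->
  Kscal s w = 1 -> count negb w = count id w.
Proof.
move=> s0 hk; rewrite /Kscal => e.
have sn k : s ^+ k != 0 by rewrite expf_neq0.
have e2 : s ^+ count negb w = s ^+ count id w.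
  by rewrite -[RHS]mul1r -e -mulrA mulVf ?mulr1.
set a := count negb w in e2 *; set b := count id w in e2 *.
case: (ltngtP a b) => // h; exfalso.
  move: e2; rewrite -(subnK (ltnW h)) exprD => e2.
  have : s ^+ (b - a) = 1 by apply: (mulIf (sn a)); rewrite mul1r -e2.
  by apply/eqP; apply: hk; rewrite subn_gt0.
move: e2; rewrite -(subnK (ltnW h)) exprD => e2.
have : s ^+ (a - b) = 1 by apply: (mulIf (sn b)); rewrite mul1r e2.
by apply/eqP; apply: hk; rewrite subn_gt0.
Qed.

Theorem proposition6p1 (R : realType) (q s : R[i]) :
  `|q| = 1 -> q != 1 -> q != -1 -> q != 'i -> q != - 'i ->
  s ^+ 2 = q ->
  (forall d : nat, (0 < d)%N -> q ^+ (2 * d) != 1) ->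
  ~ inv_fin_gen s.
Proof.
move=> q1 _ _ _ _ sq hq [S [HS Hgen]].
have s0 : s != 0.
  apply/negP => /eqP s0'; move: q1; rewrite -sq s0' expr2 mul0r normr0 => /esym/eqP.
  by rewrite oner_eq0.
have hk : forall k, (0 < k)%N -> s ^+ k != 1.
  move=> k k0; apply: contra (hq k k0) => /eqP sk1; apply/eqP.
  rewrite -sq -exprM; have -> : (2 * (2 * k) = k * 4)%N by lia.
  by rewrite exprM sk1 expr1n.
have [N HN] : exists N, forall f, List.In f S -> fs _ f N.
  elim: S HS {Hgen} => [|g S IH] HS; first by exists 0%N.
  have [N hN] := IH (fun f h => HS f (or_intror h)).
  have [[M hM] _] := HS g (or_introl erefl).
  exists (maxn M N) => f [<-|h] w hw.
    by apply: hM; move: hw; rewrite geq_max => /andP [].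
  by apply: (hN f h); move: hw; rewrite geq_max => /andP [].
set n := N.+1.
have [EI FI KI] := @Iw_props _ s s0 n.
have inv : Defs.invariant s (Iw _ s n).
  split; first exact: fs_Iw.
  split; first by move=> w; rewrite EI.
  split; first by move=> w; rewrite FI.
  by move=> w; rewrite Kop_Kf KI.
have HSn : forall g, List.In g S -> bal _ g /\ g (wn n) = 0.
  move=> g hg; split.
    move=> w h; have [_ [_ [_ K]]] := HS g hg.
    move: (K w); rewrite Kop_Kf /Kf => Kw.
    apply/eqP; apply: contraNT h => gw; apply/eqP; apply: Kscal_one s0 hk _.
    by apply: (mulIf gw); rewrite mul1r.
  apply: (HN g hg); rewrite /wn size_cat !size_nseq /n; lia.
have [_] := @P_gen _ s s0 S n _ (ltn0Sn _) HSn (Hgen _ inv).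
by rewrite Iw_wn => /eqP; rewrite oner_eq0.
Qed.
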